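(* Let $(\Omega,\mathcal{F},P)=([0,1],\mathcal{B}([0,1]),\lambda)$ with $\lambda$ Lebesgue measure. Let $(\varepsilon_n)\subset(0,1)$ with $\varepsilon_n\to0$, and let $S^n_1(\omega)=-\frac{1}{\sqrt{\omega}}$ for $\omega\in[0,\varepsilon_n)$ and $S^n_1(\omega)=\frac{1}{(1-\omega)^{1/(n+1)}}$ for $\omega\in[\varepsilon_n,1]$, where $(\varepsilon_n)$ is chosen such that $E[S^n_1]=1$ for all $n$. Then there is no probability measure $Q\sim\lambda$ such that $E_Q[S^n_1]=0$ for all $n\in\mathbb{N}$. *)

(* Defs.v *)
From HB Require Import structures.
From mathcomp Require Import all_boot all_order all_algebra.
From mathcomp Require Import all_classical all_reals all_analysis.
Set Implicit Arguments. Unset Strict Implicit. Unset Printing Implicit Defensive.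
Import Order.TTheory GRing.Theory Num.Theory.
Local Open Scope ring_scope.

(* The random variable S^n_1 on Omega = [0,1], given the sequence eps:
   S^n_1(w) = -1/sqrt(w)             for w in [0, eps n)
   S^n_1(w) = 1/(1-w)^(1/(n+1))      for w in [eps n, 1].
   (At the two null points w = 0 and w = 1 the paper's formula is 1/0; here
   the MathComp convention 0^-1 = 0 applies, irrelevant up to null sets.) *)
Definition S1 (R : realType) (eps : nat -> R) (n : nat) (w : R) : R :=
  if w < eps n then - (Num.sqrt w)^-1
  else ((1 - w) `^ (n.+1%:R)^-1)^-1.

(* Main.v *)
Require Import Defs.
From HB Require Import structures.
From mathcomp Require Import all_boot all_order all_algebra.
From mathcomp Require Import all_classical all_reals all_analysis.
Import Order.TTheory GRing.Theory Num.Theory.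
From mathcomp Require Import measurable_realfun.
From mathcomp Require Import ring lra.
Local Open Scope classical_set_scope.
Local Open Scope ring_scope.
Lemma sub0_fin (R : realType) (a b : \bar R) : (0 <= a -> 0 <= b -> a - b = 0 ->
  b < +oo /\ a = b)%E.
Proof.
case: a => [a||]; case: b => [b||] //= a0 b0.
move=> h; have : (a - b)%R = 0%R by move: h; rewrite -EFinD => -[].
by move/eqP; rewrite subr_eq0 => /eqP ->; split => //; exact: ltry.
Qed.

Lemma mS1 (R : realType) (eps : nat -> R) n : measurable_fun setT (S1 eps n).
Proof.
have -> : S1 eps n = fun w => if w < eps n then - ((Num.sqrt w) `^ (-1))
   else (1 - w) `^ (- (n.+1%:R^-1)).
  by apply/funext => w; rewrite /S1 powR_inv1 ?sqrtr_ge0 // powRN.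
apply: measurable_fun_ifT.
- apply: (measurable_fun_ltr (f := id)) => //; exact: measurable_cst.
- apply: measurable_funN; apply: measurableT_comp (measurable_powR _) _.
  apply: continuous_measurable_fun; exact: sqrt_continuous.
- apply: measurableT_comp (measurable_powR _) _; apply: measurable_funB => //.
Qed.

Lemma mg (R : realType) : measurable_fun setT (fun w : R => (Num.sqrt w)^-1).
Proof.
have -> : (fun w : R => (Num.sqrt w)^-1) = fun w => ((Num.sqrt w) `^ (-1)).
  by apply/funext => w; rewrite powR_inv1 ?sqrtr_ge0.
apply: measurableT_comp (measurable_powR _) _.
apply: continuous_measurable_fun; exact: sqrt_continuous.
Qed.

Lemma near_ex (P : set nat) : nbhs \oo P -> exists n, P n.
Proof. by case=> N _ HN; exists N; apply: HN => /=. Qed.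

Theorem lemma6p3 (R : realType) (eps : nat -> R)
  (heps01 : forall n : nat, (0 < n)%N -> 0 < eps n < 1)
  (heps0 : eps @ \oo --> 0)
  (hE : forall n : nat, (0 < n)%N ->
     (\int[lebesgue_measure]_(w in `[0%R, 1%R]) (S1 eps n w)%:E = 1)%E) :
  ~ exists Q : probability (measurableTypeR R) R,
      Q `[0%R, 1%R]%classic = 1%E /\
      (forall A : set R, measurable A -> A `<=` `[0%R, 1%R]%classic ->
         (Q A = 0%E <-> lebesgue_measure A = 0%E)) /\
      (forall n : nat, (0 < n)%N ->
         (\int[Q]_(w in `[0%R, 1%R]) (S1 eps n w)%:E = 0)%E).
Proof.
move=> [Q [QD [Qnull hQ]]].
set D : set R := `[0%R, 1%R]%classic.
have mD : measurable D by exact: measurable_itv.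
have QD' : Q D = 1%E := QD.
have D01 w : D w -> 0 <= w <= 1 by rewrite /D /= in_itv.
pose g (w : R) := (Num.sqrt w)^-1.
have g0 w : 0 <= g w by rewrite invr_ge0 sqrtr_ge0.
have Qpt x : D x -> Q [set x] = 0%E.
  move=> Dx; apply/(Qnull _ (measurable_set1 _) _).2; last exact: lebesgue_measure_set1.
  by move=> y /= ->.
have Q0 : Q [set 0] = 0%E by apply: Qpt; rewrite /D /= in_itv /= lexx ler01.
have Q1 : Q [set 1] = 0%E by apply: Qpt; rewrite /D /= in_itv /= lexx ler01.
pose S n := fun w => (S1 eps n w)%:E.
have mSD0 n : measurable_fun D (S n).
  by apply/measurable_EFinP; exact: measurable_funTS (mS1 _ eps n).
have mSD n : measurable_fun (T:=measurableTypeR R) D (S n) := mSD0 n.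
have SposE n w : ((S n)^\+ w)%E = (Num.max (S1 eps n w) 0)%:E.
  by rewrite funeposE EFin_max.
have SnegE n w : ((S n)^\- w)%E = (Num.max (- S1 eps n w) 0)%:E.
  by rewrite funenegE EFin_max EFinN.
have PN n : (0 < n)%N -> (\int[Q]_(w in D) (S n)^\- w < +oo /\
    \int[Q]_(w in D) (S n)^\+ w = \int[Q]_(w in D) (S n)^\- w)%E.
  move=> n0; apply: sub0_fin.
  - by apply: integral_ge0 => x _; rewrite SposE lee_fin le_max lexx orbT.
  - by apply: integral_ge0 => x _; rewrite SnegE lee_fin le_max lexx orbT.
  - by rewrite -integralE; exact: hQ.
have /andP[a0 a1] : 0 < eps 1%N < 1 by exact: heps01.
set a := eps 1%N.
pose G w := (g w + 1) * (\1_(`]0, a[%classic) w : R).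
pose f_ n w := (g w + 1) * (\1_(`]0, Num.min (eps n) a[%classic) w : R).
have GE w : G w = if (0 < w) && (w < a) then g w + 1 else 0.
  by rewrite /G indicE mem_setE /= in_itv /=; case: ifP; rewrite ?mulr1 ?mulr0.
have fE n w : f_ n w = if (0 < w) && (w < eps n) && (w < a) then g w + 1 else 0.
  by rewrite /f_ indicE mem_setE /= in_itv /= lt_min andbA; case: ifP; rewrite ?mulr1 ?mulr0.
have mgg : measurable_fun setT (fun w => g w + 1).
  by apply: measurable_funD; [exact: mg|exact: measurable_cst].
have mG0 : measurable_fun D (fun w => (G w)%:E).
  apply/measurable_EFinP; apply: measurable_funTS; apply: measurable_funM => //.
have mf0 n : measurable_fun D (fun w => (f_ n w)%:E).
  apply/measurable_EFinP; apply: measurable_funTS; apply: measurable_funM => //.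
have mG : measurable_fun (T:=measurableTypeR R) D (fun w => (G w)%:E) := mG0.
have mf n : measurable_fun (T:=measurableTypeR R) D (fun w => (f_ n w)%:E) := mf0 n.
have f0 n w : 0 <= f_ n w by rewrite fE; case: ifP => // _; rewrite addr_ge0.
have G0 w : 0 <= G w by rewrite GE; case: ifP => // _; rewrite addr_ge0.
have fcv : (\forall x \ae Q, D x ->
    (fun n => (f_ n x)%:E) @ \oo --> (cst 0%E x))%E.
  apply: aeW => w _ /=.
  apply: cvg_near_cst.
  have [w0|w0] := leP w 0.
    by apply: nearW => n; rewrite fE ltNge w0.
  by apply: filterS (cvgr_lt 0 heps0 w w0) => n hn /=; rewrite fE [w < eps n]ltNge (ltW hn) andbF.
have fdom : (\forall x \ae Q, forall n, D x -> `|(f_ n x)%:E| <= (G x)%:E)%E.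
  apply: aeW => w n _; rewrite gee0_abs; last by rewrite lee_fin.
  rewrite lee_fin fE GE.
  case: ifP => [/andP[/andP[-> _] ->]//|_]; by case: ifP => // _; rewrite addr_ge0.
have iG : Q.-integrable D (fun w => (G w)%:E).
  apply/integrableP; split => //.
  rewrite (@eq_integral _ _ _ Q D (fun w => (G w)%:E)); last first.
    by move=> w _; rewrite gee0_abs // lee_fin.
  apply: (@le_lt_trans _ _ (\int[Q]_(w in D) ((S 1%N)^\- w + 1%E))%E).
  - apply: ge0_le_integral => //.
    + by move=> w _; rewrite lee_fin.
    + apply: emeasurable_funD => //; first exact: measurable_funeneg.
    + move=> w Dw; rewrite SnegE GE -EFinD lee_fin; case: ifP => [/andP[w0 wa]|_].
        by rewrite /S1 -/a wa opprK lerD2r le_max lexx.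
      by rewrite addr_ge0 // le_max lexx orbT.
  - rewrite ge0_integralD //.
    + rewrite integral_cst // mul1e; apply: lte_add_pinfty; last first.
        have h := probability_le1 Q mD; exact: le_lt_trans h (ltry _).
      exact (PN 1%N isT).1.
    + exact: measurable_funeneg.
have [_ _ hcv] := @dominated_convergence _ (measurableTypeR R) R Q D mD (fun n w => (f_ n w)%:E) (cst 0%E) (fun w => (G w)%:E) mf (measurable_cst _) fcv iG fdom.
rewrite integral0 in hcv.
move/fine_cvgP: hcv => [hfin hfine].
have E0 : \forall n \near \oo, (0 < n)%N by exists 1%N.
have Ea : \forall n \near \oo, eps n < a by exact: (cvgr_lt 0 heps0 a a0).
have h2 : 0 < 2^-1 :> R by rewrite invr_gt0 ltr0n.
have Eh := @cvgr_lt R nat \oo eventually_filter _ 0 hfine (2^-1) h2.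
have [n [[n0 ena] [Ffin Flt]]] := near_ex _ (filterI (filterI E0 Ea) (filterI hfin Eh)).
move: Ffin Flt => /=.
set F := (\int[Q]_(x in D) (f_ n x)%:E)%E => Ffin Flt.
have [Nfin PNe] := PN n n0.
have Nle : (\int[Q]_(w in D) (S n)^\- w <= F)%E.
  apply: ge0_le_integral => //.
  - exact: measurable_funeneg.
  - move=> w Dw; rewrite SnegE lee_fin ge_max f0 andbT fE /S1.
    case: ifP => hw.
    + rewrite opprK; have [w0|] := ltP 0 w.
        by rewrite (lt_trans hw ena) /= lerDl.
      move: (D01 w Dw) => /andP[w0 _] w0'.
      have -> : w = 0 by apply/eqP; rewrite eq_le w0' w0.
      by rewrite sqrtr0 invr0.
    + apply: (@le_trans _ _ 0); first by rewrite oppr_le0 invr_ge0 powR_ge0.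
      by case: ifP => // _; rewrite addr_ge0 ?g0.
have Qle : (1 <= \int[Q]_(w in D) (S n)^\+ w + F)%E.
  have -> : (1 = \int[Q]_(w in D) (cst 1%E) w)%E.
    by rewrite integral_cst // mul1e; exact (esym QD).
  rewrite /F -ge0_integralD //.
  apply: ae_ge0_le_integral => //.
  - by move=> w _; rewrite SposE -EFinD lee_fin addr_ge0 // le_max lexx orbT.
  - exact (emeasurable_funD (measurable_funepos (mSD n)) (mf n)).
  - exists ([set 0] `|` [set 1]); split.
    + by apply: measurableU; exact: measurable_set1.
    + by apply: null_set_setU; [exact: measurable_set1|exact: measurable_set1|exact Q0|exact Q1].
    + move=> w /= Hw.
      have [->|w0] := eqVneq w 0; first by left.
      have [->|w1] := eqVneq w 1; first by right.
      exfalso; apply: Hw => Dw.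
      have /andP[w0' w1'] := D01 w Dw.
      have wpos : 0 < w by rewrite lt_neqAle eq_sym w0 w0'.
      have wlt1 : w < 1 by rewrite lt_neqAle w1 w1'.
      rewrite SposE -EFinD lee_fin fE /S1 wpos /=.
      have hm (x : R) : x <= Num.max x 0 by rewrite le_max lexx.
      have hm0 (x : R) : 0 <= Num.max x 0 by rewrite le_max lexx orbT.
      case: ifP => hw.
      * by rewrite (lt_trans hw ena) /=; have := hm0 (- (Num.sqrt w)^-1); have := g0 w; lra.
      * set c := (n.+1%:R^-1 : R).
        have c0 : 0 <= c by rewrite invr_ge0.
        have x0 : 0 < (1 - w) `^ c by apply: powR_gt0; rewrite subr_gt0.
        have x1 : (1 - w) `^ c <= 1.
          rewrite -[leRHS](powRr0 (1 - w)).
          by apply: ger_powR => //; rewrite subr_gt0 wlt1 /= lerBlDr lerDl.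
        have : 1 <= ((1 - w) `^ c)^-1 by rewrite invf_ge1.
        have := hm ((1 - w) `^ c)^-1.
        have : 0 <= (if false && (w < a) then g w + 1 else 0) by [].
        move=> _ hh1 hh2; rewrite /= addr0; exact: le_trans hh2 hh1.
  - exact: measurable_funepos.
  - by move=> w _; rewrite lee_fin.
have N0 : (0 <= \int[Q]_(w in D) (S n)^\- w)%E.
  by apply: integral_ge0 => w _; rewrite SnegE lee_fin le_max lexx orbT.
move: Qle Nle N0; rewrite PNe -(fineK Ffin).
case: (\int[Q]_(w in D) (S n)^\- w)%E => [x||] //=.
rewrite -EFinD !lee_fin => hh1 hh2 hh3.
move: (fine F) hh1 hh2 Flt => y hh1 hh2 Flt; clear -hh1 hh2 hh3 Flt; lra.
Qed.
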